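(* Let $X$ be a supersingular abelian surface over a field of characteristic $p>0$, let $D$ be a real quadratic field, and let $i:D\hookrightarrow\mathrm{End}^0(X)$ be an injective ring homomorphism with $i(1)=\mathrm{Id}_X$. Then the $D$-algebras $\mathrm{End}^0(X,i)$ and $\mathbb H_{p,D}=\mathbb H_p\otimes_{\mathbb Q}D$ are isomorphic.
   Context: $\mathrm{End}^0(X)=\mathrm{End}(X)\otimes\mathbb Q$ (endomorphisms over an algebraic closure); for supersingular abelian surfaces $\mathrm{End}^0(X)\cong\mathrm{Mat}_2(\mathbb H_p)$, where $\mathbb H_p$ is the quaternion $\mathbb Q$-algebra ramified exactly at $p$ and $\infty$. $\mathrm{End}^0(X,i)=\{u\in\mathrm{End}^0(X): i(y)u=ui(y)\ \forall y\in D\}$ is the centralizer of $i(D)$, a $D$-algebra via $i$. *)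

(* Defs.v *)
From HB Require Import structures.
From mathcomp Require Import all_boot all_order all_algebra all_field.
From mathcomp Require Import ring.
Set Implicit Arguments. Unset Strict Implicit. Unset Printing Implicit Defensive.
Import GRing.Theory Num.Theory.
Local Open Scope ring_scope.

Section Quat.
Variables (K : fieldType) (a b : K).
Definition quat (a' b' : K) : Type := (K^o * K^o * K^o * K^o)%type.
Local Notation Q := (quat a b).
HB.instance Definition _ := GRing.Lmodule.copy Q (K^o * K^o * K^o * K^o)%type.
Definition qmul (x y : Q) : Q :=
  let: (x0, x1, x2, x3) := x in let: (y0, y1, y2, y3) := y in
  (x0 * y0 + a * x1 * y1 + b * x2 * y2 - a * b * x3 * y3,
   x0 * y1 + x1 * y0 - b * x2 * y3 + b * x3 * y2,
   x0 * y2 + x2 * y0 + a * x1 * y3 - a * x3 * y1,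
   x0 * y3 + x3 * y0 + x1 * y2 - x2 * y1).
Definition qone : Q := (1, 0, 0, 0).
Lemma qaddE (x0 x1 x2 x3 y0 y1 y2 y3 : K) :
  ((x0, x1, x2, x3) : Q) + (y0, y1, y2, y3) = (x0 + y0, x1 + y1, x2 + y2, x3 + y3).
Proof. by []. Qed.
Lemma qmulA : associative qmul.
Proof. by move=> [[[x0 x1] x2] x3] [[[y0 y1] y2] y3] [[[z0 z1] z2] z3] /=; congr (_, _, _, _); ring. Qed.
Lemma qmul1 : left_id qone qmul.
Proof. by move=> [[[x0 x1] x2] x3] /=; congr (_, _, _, _); ring. Qed.
Lemma qmulr1 : right_id qone qmul.
Proof. by move=> [[[x0 x1] x2] x3] /=; congr (_, _, _, _); ring. Qed.
Lemma qmulDl : left_distributive qmul +%R.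
Proof. by move=> [[[x0 x1] x2] x3] [[[y0 y1] y2] y3] [[[z0 z1] z2] z3]; rewrite ?qaddE /= ?qaddE; congr (_, _, _, _); ring. Qed.
Lemma qmulDr : right_distributive qmul +%R.
Proof. by move=> [[[x0 x1] x2] x3] [[[y0 y1] y2] y3] [[[z0 z1] z2] z3]; rewrite ?qaddE /= ?qaddE; congr (_, _, _, _); ring. Qed.
Lemma qone_neq0 : qone != 0 :> Q.
Proof. by apply/negP => /eqP [] /eqP; rewrite oner_eq0. Qed.
HB.instance Definition _ := GRing.Zmodule_isNzRing.Build Q qmulA qmul1 qmulr1 qmulDl qmulDr qone_neq0.
End Quat.
Arguments quat {K} a' b'.

(* quat a b  = the quaternion algebra (a,b)_K over a field K, with K-basis
   1, i, j, k=ij, i^2 = a, j^2 = b, ij = -ji.  An element (x0,x1,x2,x3)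
   stands for x0 + x1 i + x2 j + x3 k.  For a field extension D/Q and
   a,b in Q one has (a,b)_Q (x)_Q D = (a,b)_D, which is how the tensor
   product H_p (x)_Q D is modelled below.                                 *)

(* For nonzero integers a b, the quaternion algebra (a,b)_Q ramifies at a
   place v iff the Hilbert symbol (a,b)_v equals -1.  Write a = l^alpha u,
   b = l^beta v with u, v prime to l.
   - l odd  : (a,b)_l = (-1)^(alpha beta (l-1)/2) (u/l)^beta (v/l)^alpha
   - l = 2  : (a,b)_2 = (-1)^(eps(u)eps(v) + alpha omega(v) + beta omega(u))
   - v = oo : (a,b)_oo = -1 iff a < 0 and b < 0.
   (Serre, A Course in Arithmetic, Ch. III, Thm. 1.)  The booleans below are
   true exactly when the corresponding symbol equals -1.                  *)

Definition unit_part (l : nat) (a : int) : int :=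
  (a %/ (l ^ logn l `|a|)%N%:Z)%Z.

Definition is_sq_mod (l : nat) (u : int) : bool :=
  [exists x : 'I_l, ((x%:Z ^+ 2 - u) %% l%:Z == 0)%Z].

Definition eps2 (u : int) : bool := ((u %% 4)%Z == 3).
Definition omega2 (u : int) : bool := ((u %% 8)%Z == 3) || ((u %% 8)%Z == 5).

Definition hilbert_neg (l : nat) (a b : int) : bool :=
  let al := logn l `|a| in let be := logn l `|b| in
  let u := unit_part l a in let v := unit_part l b in
  if l == 2 then
    [&& eps2 u & eps2 v] (+) (odd al && omega2 v) (+) (odd be && omega2 u)
  else
    (odd (al * be) && ((l %% 4)%N == 3)%N) (+) (odd be && ~~ is_sq_mod l u)
      (+) (odd al && ~~ is_sq_mod l v).

Definition hilbert_neg_inf (a b : int) : bool := (a < 0) && (b < 0).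

Definition ramified_exactly_at_p_inf (p : nat) (a b : int) : Prop :=
  hilbert_neg_inf a b /\ (forall l : nat, prime l -> (hilbert_neg l a b <-> l = p)).

Definition Hq (a b : int) := quat (a%:~R : rat) (b%:~R : rat).
Definition HqD (D : fieldExtType rat) (a b : int) := quat (a%:~R : D) (b%:~R : D).

Definition real_quadratic_field (D : fieldExtType rat) : Prop :=
  \dim {: D} = 2%N /\
  exists (d : rat) (delta : D),
    [/\ 0 < d, forall r : rat, r ^+ 2 != d & delta ^+ 2 = d%:A].

(* End^0(X, i): the centralizer of i(D) *)
Definition centralizes (D : fieldExtType rat) (A : nzRingType) (i : D -> A) (u : A) : Prop :=
  forall y : D, i y * u = u * i y.

Definition centralizer_Dalg_iso (D : fieldExtType rat) (a b : int)
    (i : D -> 'M[Hq a b]_2) : Prop :=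
  exists f : 'M[Hq a b]_2 -> HqD D a b,
    [/\ (forall u v, centralizes i u -> centralizes i v -> f (u + v) = f u + f v),
        (forall u v, centralizes i u -> centralizes i v -> f (u * v) = f u * f v),
        f 1 = 1 &
        (forall (y : D) u, centralizes i u -> f (i y * u) = y *: f u)] /\
    [/\ (forall u v, centralizes i u -> centralizes i v -> f u = f v -> u = v) &
        (forall q : HqD D a b, exists2 u, centralizes i u & f u = q)].

(* Main.v *)
Require Import Defs.
From HB Require Import structures.
From mathcomp Require Import all_boot all_order all_algebra all_field ring lra.
Import GRing.Theory Num.Theory.
Set Implicit Arguments. Unset Strict Implicit. Unset Printing Implicit Defensive.
Local Open Scope ring_scope.

Section GenQ.
Variables (K : fieldType) (a b : K).
Local Notation Q := (quat a b).
Lemma qmulE (x0 x1 x2 x3 y0 y1 y2 y3 : K) : ((x0,x1,x2,x3) : Q) * (y0,y1,y2,y3) =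
  ((x0 * y0 + a * x1 * y1 + b * x2 * y2 - a * b * x3 * y3,
   x0 * y1 + x1 * y0 - b * x2 * y3 + b * x3 * y2,
   x0 * y2 + x2 * y0 + a * x1 * y3 - a * x3 * y1,
   x0 * y3 + x3 * y0 + x1 * y2 - x2 * y1) : Q).
Proof. by []. Qed.
Lemma qscE (c x0 x1 x2 x3 : K) : c *: ((x0,x1,x2,x3) : Q) = ((c*x0,c*x1,c*x2,c*x3) : Q).
Proof. by []. Qed.
Lemma qoneE : (1 : Q) = ((1,0,0,0) : Q). Proof. by []. Qed.
Lemma qzeroE : (0 : Q) = ((0,0,0,0) : Q). Proof. by []. Qed.
Lemma qaddE' (x0 x1 x2 x3 y0 y1 y2 y3 : K) :
  ((x0, x1, x2, x3) : Q) + (y0, y1, y2, y3) = ((x0 + y0, x1 + y1, x2 + y2, x3 + y3) : Q).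
Proof. by []. Qed.
Lemma qscAl (c : K) (u v : Q) : (c *: u : Q) * v = c *: (u * v).
Proof.
case: u => [[[x0 x1] x2] x3]; case: v => [[[y0 y1] y2] y3].
by rewrite ?qscE ?qmulE ?qscE; congr (_,_,_,_); ring.
Qed.
Lemma qscAr (c : K) (u v : Q) : u * (c *: v : Q) = c *: (u * v).
Proof.
case: u => [[[x0 x1] x2] x3]; case: v => [[[y0 y1] y2] y3].
by rewrite ?qscE ?qmulE ?qscE; congr (_,_,_,_); ring.
Qed.
Lemma qsc1l (c : K) (u : Q) : (c *: (1:Q) : Q) * u = c *: u.
Proof. by rewrite qscAl mul1r. Qed.
Lemma qsc1r (c : K) (u : Q) : u * (c *: (1:Q) : Q) = c *: u.
Proof. by rewrite qscAr mulr1. Qed.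
Lemma qsc_comm (c : K) (u : Q) : (c *: (1:Q) : Q) * u = u * (c *: (1:Q) : Q).
Proof. by rewrite qsc1l qsc1r. Qed.
Definition qconj (x : Q) : Q := let: (x0,x1,x2,x3) := x in ((x0,-x1,-x2,-x3) : Q).
Definition qnorm (x : Q) : K := let: (x0,x1,x2,x3) := x in
  x0 * x0 - a * x1 * x1 - b * x2 * x2 + a * b * x3 * x3.
Lemma qconjR (x : Q) : x * qconj x = qnorm x *: (1 : Q).
Proof. case: x => [[[x0 x1] x2] x3] /=; rewrite qmulE qscE; congr (_,_,_,_); ring. Qed.
Lemma qconjL (x : Q) : qconj x * x = qnorm x *: (1 : Q).
Proof. case: x => [[[x0 x1] x2] x3] /=; rewrite qmulE qscE; congr (_,_,_,_); ring. Qed.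
End GenQ.
Arguments qnorm {K} a b x.
Arguments qconj {K} a b x.
Section RatQ.
Variables (a b : int).
Hypotheses (ha : a < 0) (hb : b < 0).
Local Notation H := (Hq a b).
Local Notation aq := (a%:~R : rat).
Local Notation bq := (b%:~R : rat).
Lemma aq_lt0 : aq < 0. Proof. by rewrite ltrz0. Qed.
Lemma bq_lt0 : bq < 0. Proof. by rewrite ltrz0. Qed.

Lemma qnorm_neq0 (x : H) : x != 0 -> qnorm aq bq x != 0.
Proof.
case: x => [[[x0 x1] x2] x3] /= Hx; apply/eqP => E.
have A := aq_lt0; have B := bq_lt0.
have t0 : 0 <= x0 * x0 by nra.
have t1 : 0 <= - aq * x1 * x1 by nra.
have t2 : 0 <= - bq * x2 * x2 by nra.
have t3 : 0 <= aq * bq * x3 * x3.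
  have p : 0 <= aq * bq by nra.
  have q : 0 <= x3 * x3 by nra.
  have : 0 <= (aq * bq) * (x3 * x3) by apply: mulr_ge0.
  by rewrite !mulrA.
have An : aq != 0 by rewrite ltr0_neq0.
have Bn : bq != 0 by rewrite ltr0_neq0.
have e0 : x0 = 0.
  have : x0 * x0 = 0 by lra.
  by move/eqP; rewrite mulf_eq0 orbb => /eqP.
have e1 : x1 = 0.
  have : aq * (x1 * x1) = 0 by lra.
  by move/eqP; rewrite !mulf_eq0 (negbTE An) orbb /= => /eqP.
have e2 : x2 = 0.
  have : bq * (x2 * x2) = 0 by lra.
  by move/eqP; rewrite !mulf_eq0 (negbTE Bn) orbb /= => /eqP.
have e3 : x3 = 0.
  have : (aq * bq) * (x3 * x3) = 0 by lra.
  by move/eqP; rewrite !mulf_eq0 (negbTE An) (negbTE Bn) /= orbb => /eqP.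
by move: Hx; rewrite e0 e1 e2 e3 eqxx.
Qed.

Definition qinv (x : H) : H := (qnorm aq bq x)^-1 *: qconj aq bq x.
Lemma qinvR (x : H) : x != 0 -> x * qinv x = 1.
Proof. by move=> nz; rewrite /qinv qscAr qconjR scalerA mulVf ?scale1r // qnorm_neq0. Qed.
Lemma qinvL (x : H) : x != 0 -> qinv x * x = 1.
Proof. by move=> nz; rewrite /qinv qscAl qconjL scalerA mulVf ?scale1r // qnorm_neq0. Qed.

Lemma no_sqrt (d : rat) (h : H) : 0 < d -> (forall r : rat, r ^+ 2 != d) ->
  h * h <> d *: (1 : H).
Proof.
move=> d0 nsq; case: h => [[[x0 x1] x2] x3].
rewrite qmulE qoneE qscE => -[E0 E1 E2 E3].
have A := aq_lt0; have B := bq_lt0.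
have [z|nz] := eqVneq x0 0.
  move: E0; rewrite z => E0.
  have t1 : aq * x1 * x1 <= 0 by nra.
  have t2 : bq * x2 * x2 <= 0 by nra.
  have t3 : 0 <= aq * bq * x3 * x3.
  have p : 0 <= aq * bq by nra.
  have q : 0 <= x3 * x3 by nra.
  have : 0 <= (aq * bq) * (x3 * x3) by apply: mulr_ge0.
  by rewrite !mulrA.
  nra.
have e1 : x1 = 0.
  have : x0 * x1 = 0 by lra.
  by move/eqP; rewrite mulf_eq0 (negbTE nz) /= => /eqP.
have e2 : x2 = 0.
  have : x0 * x2 = 0 by lra.
  by move/eqP; rewrite mulf_eq0 (negbTE nz) /= => /eqP.
have e3 : x3 = 0.
  have : x0 * x3 = 0 by lra.
  by move/eqP; rewrite mulf_eq0 (negbTE nz) /= => /eqP.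
move: E0; rewrite e1 e2 e3 => E0.
by move: (nsq x0); rewrite expr2 mulr1 in E0 *; rewrite -E0; apply/negP; rewrite negbK; apply/eqP; ring.
Qed.
End RatQ.
Section Mx.
Variables (a b : int).
Local Notation H := (Hq a b).
Local Notation M := ('M[H]_2).

Lemma mulmx2E (A B : M) i j : (A * B) i j = A i 0 * B 0 j + A i 1 * B 1 j.
Proof. rewrite -mulmxE mxE big_ord_recl big_ord1 /=. have e0 : ord0 = 0 :> 'I_2 by apply: val_inj. have e1 : lift ord0 ord0 = 1 :> 'I_2 by apply: val_inj. by rewrite e0 e1. Qed.

Lemma mx2P (A B : M) : A 0 0 = B 0 0 -> A 0 1 = B 0 1 -> A 1 0 = B 1 0 ->
  A 1 1 = B 1 1 -> A = B.
Proof.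
move=> e00 e01 e10 e11; apply/matrixP => i j.
have [-> | ->] : i = 0 \/ i = 1.
  by case: i => [[|[|//]]] Hi; [left|right]; apply: val_inj.
all: have [-> | ->] : j = 0 \/ j = 1 by case: j => [[|[|//]]] Hj; [left|right]; apply: val_inj.
all: by [].
Qed.

Definition hsc (c : rat) : H := c *: (1 : H).
Definition S (c : rat) : M := (hsc c)%:M.

Lemma scmxE (x : H) i j : (x%:M : M) i j = x *+ (i == j).
Proof. by rewrite mxE. Qed.

Lemma S_comm c (A : M) : S c * A = A * S c.
Proof.
apply: mx2P; rewrite !mulmx2E !scmxE /= ?mulr0n ?mulr1n ?mulr0 ?mul0r ?add0r ?addr0;
  by rewrite /hsc qsc_comm.
Qed.

Lemma mxMn (X : M) n i j : (X *+ n) i j = X i j *+ n.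
Proof. elim: n => [|n IH]; first by rewrite !mulr0n mxE. by rewrite !mulrS mxE IH. Qed.

Lemma mx_cancel (X Y : M) n : (0 < n)%N -> X *+ n = Y *+ n -> X = Y.
Proof.
move=> n0 E; apply/matrixP => i j.
have : X i j *+ n = Y i j *+ n by rewrite -!mxMn E.
rewrite -!scaler_nat => /(congr1 (fun v => (n%:R : rat)^-1 *: v)).
by rewrite !scalerK // pnatr_eq0 -lt0n.
Qed.
End Mx.
Section IRat.
Variables (a b : int) (D : fieldExtType rat).
Local Notation H := (Hq a b).
Local Notation M := ('M[H]_2).
Variable (i : {rmorphism D -> M}).

Lemma i_rat c : i (c%:A) = S a b c.
Proof.
set m := `|denq c|%N.
have m0 : (0 < m)%N by rewrite absz_gt0 denq_neq0.
have cm : c *+ m = (numq c)%:~R.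
  by rewrite -mulr_natr natr_absz gtr0_norm ?denq_gt0 // -numqE.
apply: (mx_cancel m0).
rewrite -rmorphMn scalerMnl cm scaler_int rmorph_int.
rewrite /S /hsc -raddfMn /= scalerMnl cm scaler_int.
by rewrite rmorph_int.
Qed.
End IRat.
Lemma zlem (V : zmodType) (v u v' u' : V) : v + u = v' + u' -> u - u' = v' - v.
Proof. by move=> E; rewrite -[u](addKr v) E addrA [-v + v']addrC addrK. Qed.
Section Dec.
Variables (D : fieldExtType rat) (d : rat) (dl : D).
Hypotheses (nsq : forall r : rat, r ^+ 2 != d) (hdl : dl ^+ 2 = d%:A)
  (dim2 : \dim {: D} = 2%N).

Lemma dl_notin (c : rat) : dl != c%:A.
Proof.
apply/eqP => E; move: hdl; rewrite E expr2 mulr_algl scalerA => h.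
move: (nsq c); rewrite expr2.
have: in_alg D (c * c) = in_alg D d by [].
by move/(fmorph_inj (in_alg D)) => ->; rewrite eqxx.
Qed.

Lemma indep r s r' s' : r%:A + s *: dl = r'%:A + s' *: dl -> r = r' /\ s = s'.
Proof.
move=> E.
have [es|ns] := eqVneq s s'.
  move: E; rewrite es => /addIr /(fmorph_inj (in_alg D)) ->; by [].
exfalso; move/eqP: (dl_notin ((r' - r) / (s - s'))); apply.
have E2 : (s - s') *: dl = (r' - r)%:A.
  rewrite scalerBl scalerBl; exact: zlem E.
by rewrite mulrC -scalerA -E2 scalerA mulVf ?scale1r // subr_eq0.
Qed.

Lemma decomp (y : D) : exists r s : rat, y = r%:A + s *: dl.
Proof.
have fr : free [:: 1; dl].
  rewrite free_cons seq1_free span_seq1; apply/andP; split; last first.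
    by apply/eqP => E; move: (dl_notin 0); rewrite E scale0r eqxx.
  apply/vlineP => -[k E].
  have kn : k != 0 by apply/eqP => k0; move: E; rewrite k0 scale0r => /eqP; rewrite oner_eq0.
  by move: (dl_notin k^-1); rewrite E scalerA mulVf // scale1r eqxx.
have bas : basis_of fullv [:: 1; dl].
  by rewrite basisEfree fr subvf dim2.
have := coord_basis (X := [tuple 1; dl]) bas (memvf y).
rewrite big_ord_recl big_ord1 /= => ->.
by do 2 eexists.
Qed.
End Dec.
Section Main.
Variables (a b : int) (D : fieldExtType rat) (d : rat) (dl : D).
Hypotheses (ha : a < 0) (hb : b < 0) (d0 : 0 < d)
  (nsq : forall r : rat, r ^+ 2 != d) (hdl : dl ^+ 2 = d%:A).
Local Notation H := (Hq a b).
Local Notation M := ('M[H]_2).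
Local Notation HD := (HqD D a b).
Variable i : {rmorphism D -> M}.

Definition mk2 (x y z w : H) : M := \matrix_(k < 2, l < 2)
  if k == 0 then (if l == 0 then x else y) else (if l == 0 then z else w).
Lemma mk00 x y z w : mk2 x y z w 0 0 = x. Proof. by rewrite mxE. Qed.
Lemma mk01 x y z w : mk2 x y z w 0 1 = y. Proof. by rewrite mxE. Qed.
Lemma mk10 x y z w : mk2 x y z w 1 0 = z. Proof. by rewrite mxE. Qed.
Lemma mk11 x y z w : mk2 x y z w 1 1 = w. Proof. by rewrite mxE. Qed.
Lemma one00 : (1 : M) 0 0 = 1. Proof. by rewrite mxE. Qed.
Lemma one01 : (1 : M) 0 1 = 0. Proof. by rewrite mxE. Qed.
Lemma one10 : (1 : M) 1 0 = 0. Proof. by rewrite mxE. Qed.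
Lemma one11 : (1 : M) 1 1 = 1. Proof. by rewrite mxE. Qed.
Definition mkE := (mk00, mk01, mk10, mk11, one00, one01, one10, one11).
Definition rsimp := (mul0r, mulr0, mul1r, mulr1, add0r, addr0).

Let J : M := i dl.
Let al : H := J 0 0. Let be : H := J 0 1. Let ga : H := J 1 0. Let ep : H := J 1 1.
Lemma JJ : J * J = S a b d.
Proof. by rewrite -rmorphM -expr2 hdl i_rat. Qed.
Lemma e00 : al * al + be * ga = hsc a b d.
Proof. by have := congr1 (fun X : M => X 0 0) JJ; rewrite mulmx2E /S scmxE /= mulr1n. Qed.
Lemma e10 : ga * al + ep * ga = 0.
Proof. by have := congr1 (fun X : M => X 1 0) JJ; rewrite mulmx2E /S scmxE /= mulr0n. Qed.
Lemma ga_neq0 : ga != 0.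
Proof.
apply/eqP => g0; have := e00; rewrite g0 mulr0 addr0.
move=> E; apply: (@no_sqrt a b ha hb d al d0 nsq); exact: E.
Qed.
Let gi : H := @qinv a b ga.
Let P : M := mk2 1 al 0 ga.
Let Pi : M := mk2 1 (- (al * gi)) 0 gi.
Let J0 : M := mk2 0 (hsc a b d) 1 0.
Lemma PPi : P * Pi = 1.
Proof.
apply: mx2P; rewrite !mulmx2E !mkE !rsimp //.
  by rewrite addNr.
exact: @qinvR a b ha hb ga ga_neq0.
Qed.
Lemma PiP : Pi * P = 1.
Proof.
apply: mx2P; rewrite !mulmx2E !mkE !rsimp //.
  by rewrite mulNr -mulrA /gi (@qinvL a b ha hb ga ga_neq0) mulr1 addrN.
exact: @qinvL a b ha hb ga ga_neq0.
Qed.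
Lemma JP : J * P = P * J0.
Proof.
apply: mx2P; rewrite !mulmx2E !mkE !rsimp //.
  by rewrite e00.
by rewrite e10.
Qed.
Lemma PiJ : Pi * J = J0 * Pi.
Proof. by rewrite -[Pi * J]mulr1 -PPi mulrA -(mulrA Pi) JP mulrA PiP mul1r. Qed.

Definition emb (x : H) : HD := let: (x0, x1, x2, x3) := x in
  ((in_alg D x0, in_alg D x1, in_alg D x2, in_alg D x3) : HD).
Lemma embD x y : emb (x + y) = emb x + emb y.
Proof.
case: x => [[[x0 x1] x2] x3]; case: y => [[[y0 y1] y2] y3].
by rewrite qaddE' /= qaddE' -!in_algE !rmorphD.
Qed.
Lemma embM x y : emb (x * y) = emb x * emb y.
Proof.
case: x => [[[x0 x1] x2] x3]; case: y => [[[y0 y1] y2] y3].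
by rewrite qmulE /= qmulE -!in_algE !(rmorphD, rmorphN, rmorphM, rmorph_int).
Qed.
Lemma emb1 : emb 1 = 1.
Proof. by rewrite qoneE /= qoneE scale1r scale0r. Qed.
Lemma emb0 : emb 0 = 0.
Proof. by rewrite qzeroE /= qzeroE scale0r. Qed.
Lemma emb_sc c x : emb (c *: x) = c%:A *: emb x.
Proof.
case: x => [[[x0 x1] x2] x3].
by rewrite qscE /= qscE -!in_algE !rmorphM.
Qed.

Lemma emb_hsc c x : emb (hsc a b c * x) = c%:A *: emb x.
Proof. by rewrite /hsc qsc1l emb_sc. Qed.
Lemma dd : dl * dl = d%:A. Proof. by rewrite -expr2 hdl. Qed.

Definition g (X : M) : HD := emb (X 0 0) + dl *: emb (X 1 0).
Lemma gD X Y : g (X + Y) = g X + g Y.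
Proof. by rewrite /g !mxE !embD scalerDr addrACA. Qed.
Lemma g1 : g 1 = 1.
Proof. by rewrite /g one00 one10 emb1 emb0 scaler0 addr0. Qed.
Lemma Sent c (X : M) k l : (S a b c * X) k l = hsc a b c * X k l.
Proof. by rewrite -mulmxE mul_scalar_mx mxE. Qed.
Lemma gS c X : g (S a b c * X) = c%:A *: g X.
Proof. by rewrite /g !Sent !emb_hsc scalerDr !scalerA mulrC. Qed.
Lemma gJ0 X : g (J0 * X) = dl *: g X.
Proof.
rewrite /g !mulmx2E !mkE !rsimp emb_hsc scalerDr scalerA dd addrC.
by [].
Qed.
Definition cent0 (X : M) := J0 * X = X * J0.
Lemma cent0E X : cent0 X -> X 0 1 = hsc a b d * X 1 0 /\ X 1 1 = X 0 0.
Proof.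
move=> C; split.
  have := congr1 (fun Y : M => Y 0 0) C; rewrite !mulmx2E !mkE !rsimp.
  by move=> ->.
have := congr1 (fun Y : M => Y 1 0) C; rewrite !mulmx2E !mkE !rsimp.
by move=> ->.
Qed.

Lemma gM X Y : cent0 X -> g (X * Y) = g X * g Y.
Proof.
move=> /cent0E [e01 e11].
rewrite /g !mulmx2E e01 e11 !embD -mulrA emb_hsc !embM.
set ex := emb (X 0 0); set ez := emb (X 1 0); set ex' := emb (Y 0 0); set ez' := emb (Y 1 0).
rewrite mulrDl !mulrDr !qscAl !qscAr scalerA dd scalerDr.
set B := d%:A *: _; set C := dl *: (ez * ex'); set E := dl *: (ex * ez').
by rewrite -!addrA; congr (_ + _); rewrite [C + E]addrC addrCA [B + C]addrC.
Qed.

Lemma emb_indep x z x' z' :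
  emb x + dl *: emb z = emb x' + dl *: emb z' -> x = x' /\ z = z'.
Proof.
case: x => [[[x0 x1] x2] x3]; case: z => [[[z0 z1] z2] z3].
case: x' => [[[y0 y1] y2] y3]; case: z' => [[[w0 w1] w2] w3].
rewrite /= !qscE !qaddE' => -[e0 e1 e2 e3].
move: e0 e1 e2 e3; rewrite !mulr_algr.
move=> /(indep nsq hdl) [-> ->] /(indep nsq hdl) [-> ->].
by move=> /(indep nsq hdl) [-> ->] /(indep nsq hdl) [-> ->].
Qed.
Lemma ginj X Y : cent0 X -> cent0 Y -> g X = g Y -> X = Y.
Proof.
move=> /cent0E [x01 x11] /cent0E [y01 y11] /emb_indep [e0 e1].
by apply: mx2P; rewrite ?x01 ?y01 ?x11 ?y11 ?e0 ?e1.
Qed.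

Hypothesis dim2 : \dim {: D} = 2%N.
Lemma iy y : exists r s, y = r%:A + s *: dl /\ i y = S a b r + S a b s * J.
Proof.
have [r [s Ey]] := decomp nsq hdl dim2 y.
exists r, s; split => //.
by rewrite Ey -(mulr_algl s dl) rmorphD rmorphM !i_rat.
Qed.

Lemma back w : P * (Pi * w * P) * Pi = w.
Proof. by rewrite !mulrA PPi mul1r -mulrA PPi mulr1. Qed.

Lemma mainL : centralizer_Dalg_iso i.
Proof.
have cJ : forall u, centralizes i u -> J * u = u * J by move=> u; apply.
have cX : forall u, centralizes i u -> cent0 (Pi * u * P).
  move=> u /cJ Ju; rewrite /cent0.
  by rewrite !mulrA -PiJ -(mulrA Pi J u) Ju mulrA -(mulrA _ J P) JP !mulrA.
exists (fun u => g (Pi * u * P)); split; [split|split].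
- by move=> u v _ _; rewrite mulrDr mulrDl gD.
- move=> u v cu cv; rewrite -gM; last exact: cX.
  by rewrite !mulrA -(mulrA _ P Pi) PPi mulr1.
- by rewrite mulr1 PiP g1.
- move=> y u cu.
  have [r [s [Ey Eiy]]] := iy y.
  have h1 : Pi * (S a b r * u) * P = S a b r * (Pi * u * P).
    by rewrite mulrA -S_comm !mulrA.
  have h2 : Pi * (S a b s * J * u) * P = S a b s * (J0 * (Pi * u * P)).
    by rewrite !mulrA -S_comm -(mulrA (S a b s) Pi J) PiJ !mulrA.
  rewrite Eiy mulrDl mulrDr mulrDl gD h1 h2 gS gS gJ0 scalerA -scalerDl Ey mulr_algl.
  by [].
- move=> u v cu cv E.
  have EX := ginj (cX u cu) (cX v cv) E.
  by rewrite -(back u) EX back.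
- case => [[[q0 q1] q2] q3].
  have [r0 [s0 E0]] := decomp nsq hdl dim2 q0.
  have [r1 [s1 E1]] := decomp nsq hdl dim2 q1.
  have [r2 [s2 E2]] := decomp nsq hdl dim2 q2.
  have [r3 [s3 E3]] := decomp nsq hdl dim2 q3.
  pose x : H := (r0, r1, r2, r3).
  pose z : H := (s0, s1, s2, s3).
  pose X := mk2 x (hsc a b d * z) z x.
  have cX0 : J0 * X = X * J0.
    apply: mx2P; rewrite !mulmx2E !mkE !rsimp //.
      by rewrite /hsc qsc_comm.
    by rewrite /hsc qsc_comm.
  have Ju : J * (P * X * Pi) = (P * X * Pi) * J.
    by rewrite !mulrA JP -(mulrA P J0 X) cX0 !mulrA -(mulrA _ J0 Pi) -PiJ !mulrA.
  exists (P * X * Pi).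
    move=> y; have [r [s [_ ->]]] := iy y.
    rewrite mulrDl mulrDr; congr (_ + _); first exact: S_comm.
    by rewrite -(mulrA (S a b s) J) Ju mulrA (S_comm s) -mulrA.
  rewrite !mulrA PiP mul1r -mulrA PiP mulr1.
  rewrite /g /X !mkE /x /z /= qscE qaddE' !mulr_algr.
  by rewrite E0 E1 E2 E3.
Qed.
End Main.

Theorem theorem6p1 (p : nat) (a b : int)
  (pp : prime p) (a0 : a != 0) (b0 : b != 0)
  (Hram : ramified_exactly_at_p_inf p a b)
  (D : fieldExtType rat) (HD : real_quadratic_field D)
  (i : {rmorphism D -> 'M[Hq a b]_2}) (inj_i : injective i) :
  centralizer_Dalg_iso i.
Proof.
case: HD => dim2 [d [dl [d0 nsq hdl]]].
case: Hram => /andP [ha hb] _.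
exact: (@mainL a b D d dl ha hb d0 nsq hdl i dim2).
Qed.
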